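(* Let $G_1 \le G_2$ be groups. Then $\nu(G_1) \le \nu(G_2)$, and equality holds if $[G_2 : G_1] < \infty$.
   Context: For a group $G$, the free subgroup rank is $\nu(G) = \max\{ n \ge 0 : (F_2)^n \text{ embeds into } G\} \in \mathbb{N}_0 \cup \{\infty\}$, where $F_2$ is the free group of rank two and $(F_2)^n$ is the $n$-fold direct product. *)

(* Defs.v *)
From mathcomp Require Import all_boot.
From Stdlib Require Import ClassicalEpsilon.
Set Implicit Arguments. Unset Strict Implicit. Unset Printing Implicit Defensive.

Record group := Group {
  carrier :> Type;
  gmul : carrier -> carrier -> carrier;
  gone : carrier;
  ginv : carrier -> carrier;
  gmulA : forall x y z, gmul x (gmul y z) = gmul (gmul x y) z;
  gmul1 : forall x, gmul gone x = x;
  gmulV : forall x, gmul (ginv x) x = gone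
}.

Definition is_subgroup (G : group) (H : G -> Prop) : Prop :=
  [/\ H (gone G),
      (forall x y, H x -> H y -> H (gmul x y)) &
      (forall x, H x -> H (ginv x))].

(* [G : H] < oo : finitely many left cosets t H cover G *)
Definition finite_index (G : group) (H : G -> Prop) : Prop :=
  exists s : list G, forall g : G, exists t, List.In t s /\ H (gmul (ginv t) g).

(* a letter (b, e): generator b (false = a, true = b), e = true means inverse *)
Definition letter := (bool * bool)%type.
Definition letter_inv (x : letter) : letter := (x.1, ~~ x.2).
Definition reduced (w : seq letter) : bool :=
  sorted (fun x y => y != letter_inv x) w.
Definition cons_red (x : letter) (w : seq letter) : seq letter :=
  if w is y :: w' then (if y == letter_inv x then w' else x :: w) else [:: x].
Definition reduce (w : seq letter) : seq letter := foldr cons_red [::] w.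
(* elements of (F_2)^n : n-tuples of reduced words, componentwise product *)
Definition F2n_elt n (u : {ffun 'I_n -> seq letter}) : Prop :=
  forall i, reduced (u i).
Definition F2n_mul n (u v : {ffun 'I_n -> seq letter}) : {ffun 'I_n -> seq letter} :=
  [ffun i => reduce (u i ++ v i)].

Definition embeds (n : nat) (G : group) (H : G -> Prop) : Prop :=
  exists f : {ffun 'I_n -> seq letter} -> G,
    [/\ (forall u, F2n_elt u -> H (f u)),
        (forall u v, F2n_elt u -> F2n_elt v -> f (F2n_mul u v) = gmul (f u) (f v)) &
        (forall u v, F2n_elt u -> F2n_elt v -> f u = f v -> u = v)].

Lemma embeds0 (G : group) (H : G -> Prop) : is_subgroup H -> embeds 0 H.
Proof.
case=> H1 _ _; exists (fun _ => gone G); split=> //.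
  by move=> u v _ _; rewrite gmul1.
by move=> u v _ _ _; apply/ffunP => -[].
Qed.

(* ---------- free subgroup rank, valued in N u {oo} (None = oo) ---------- *)
Definition embedsb n (G : group) (H : G -> Prop) : bool :=
  if excluded_middle_informative (embeds n H) then true else false.

Lemma embedsbP n (G : group) (H : G -> Prop) : embedsb n H <-> embeds n H.
Proof. by rewrite /embedsb; case: excluded_middle_informative. Qed.

Definition nu (G : group) (H : G -> Prop) (sH : is_subgroup H) : option nat :=
  match excluded_middle_informative
          (exists m, forall n, embeds n H -> n <= m) with
  | left hb =>
      let ex : exists n, embedsb n H :=
        ex_intro _ 0 (proj2 (embedsbP 0 H) (embeds0 sH)) in
      let bd : forall n, embedsb n H -> n <= projT1 (constructive_indefinite_description _ hb) :=
        fun n hn => projT2 (constructive_indefinite_description _ hb) n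
                      (proj1 (embedsbP n H) hn) in
      Some (ex_maxn ex bd)
  | right _ => None
  end.

Definition le_ext (a b : option nat) : Prop :=
  match a, b with
  | _, None => True
  | None, Some _ => False
  | Some m, Some n => m <= n
  end.

(* Main.v *)
Require Import Defs.
From mathcomp Require Import all_boot.
From Stdlib Require Import ClassicalEpsilon.
Set Implicit Arguments. Unset Strict Implicit. Unset Printing Implicit Defensive.

Lemma inv_neq (x : letter) : (x == letter_inv x) = false.
Proof. by case: x => a []; rewrite /letter_inv /= xpair_eqE eqxx. Qed.

Definition headok (x : letter) (t : seq letter) :=
  if t is y :: _ then y != letter_inv x else true.

Lemma foldB x k t : headok x t -> foldr cons_red t (nseq k x) = nseq k x ++ t.
Proof.
move=> Ht; elim: k => [|k IH] //=; rewrite IH.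
rewrite /cons_red; case: k {IH} => [|k] /=; last by rewrite inv_neq.
by case: t Ht => [|y t] //= /negbTE ->.
Qed.

Lemma foldC x k t : foldr cons_red (nseq k (letter_inv x) ++ t) (nseq k x) = t.
Proof.
elim: k t => [|k IH] t //=.
have E : letter_inv x :: (nseq k (letter_inv x) ++ t)
         = nseq k (letter_inv x) ++ letter_inv x :: t.
  by elim: k {IH} => //= k ->.
by rewrite E IH /cons_red eqxx.
Qed.

Definition psi (K : nat) (w : seq letter) : seq letter := flatten (map (nseq K) w).
Lemma psi_cons K x w : psi K (x :: w) = nseq K x ++ psi K w. Proof. by []. Qed.
Lemma psi_cat K a b : psi K (a ++ b) = psi K a ++ psi K b.
Proof. by rewrite /psi map_cat flatten_cat. Qed.
Lemma reduce_cons x w : reduce (x :: w) = cons_red x (reduce w). Proof. by []. Qed.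
Lemma reduce_cat a b : reduce (a ++ b) = foldr cons_red (reduce b) a.
Proof. by rewrite /reduce foldr_cat. Qed.

Lemma foldA K x r : 0 < K -> foldr cons_red (psi K r) (nseq K x) = psi K (cons_red x r).
Proof.
case: K => // K _.
case: r => [|y r]; first by rewrite foldB.
have -> : cons_red x (y :: r) = if y == letter_inv x then r else x :: y :: r by [].
case: eqP => [->|ne]; first by rewrite psi_cons foldC.
rewrite psi_cons [psi _ (x :: _)]psi_cons foldB //= -?psi_cons //.
by apply/eqP.
Qed.

Lemma psi_reduce K w : 0 < K -> psi K (reduce w) = reduce (psi K w).
Proof.
move=> K0; elim: w => [|x w IH]; first by [].
by rewrite reduce_cons psi_cons reduce_cat -IH foldA.
Qed.

Lemma reducedE x w : reduced (x :: w) = headok x w && reduced w.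
Proof. by case: w. Qed.

Lemma reduced_nseq x k t : headok x t -> reduced t -> reduced (nseq k x ++ t).
Proof.
move=> h r; elim: k => [|k IH] //; change (reduced (x :: (nseq k x ++ t))).
rewrite reducedE IH andbT.
by case: k {IH} => [|k] //=; rewrite inv_neq.
Qed.

Lemma reduced_psi K w : 0 < K -> reduced w -> reduced (psi K w).
Proof.
case: K => // K _; elim: w => [|x w IH] //.
rewrite reducedE => /andP [h r]; rewrite psi_cons reduced_nseq ?IH //.
by case: w h {IH r}.
Qed.

Lemma reduce_id w : reduced w -> reduce w = w.
Proof.
elim: w => // x w IH; rewrite reducedE => /andP [h r].
rewrite reduce_cons IH //; case: w h {IH r} => [|y w] //= h.
by rewrite /cons_red (negbTE h).
Qed.

Lemma catlI (s a b : seq letter) : s ++ a = s ++ b -> a = b.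
Proof. by elim: s => //= x s IH [] /IH. Qed.

Lemma psi_inj K : 0 < K -> injective (psi K).
Proof.
case: K => // K _; elim=> [|x a IH] [|y b] //; rewrite ?psi_cons //=.
by case=> <- /catlI /IH ->.
Qed.

Lemma reduce_nseq x k : reduce (nseq k x) = nseq k x.
Proof. by rewrite /reduce foldB // cats0. Qed.
Lemma reduced_nseq0 x k : reduced (nseq k x).
Proof. by rewrite -[nseq k x]cats0 reduced_nseq. Qed.

Definition gpow (G : group) (g : G) k := iter k (gmul g) (gone G).

Lemma gpowD (G : group) (g : G) a b : gpow g (a + b) = gmul (gpow g a) (gpow g b).
Proof.
elim: a => [|a IH]; first by rewrite /gpow /= gmul1.
by rewrite addSn /gpow /= -/(gpow g _) IH gmulA.
Qed.

Lemma gcancel (G : group) (h x : G) : gmul (ginv h) (gmul h x) = x.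
Proof. by rewrite gmulA gmulV gmul1. Qed.

Lemma in_nth (G : group) (t : G) s : List.In t s -> exists i, i < size s /\ nth (gone G) s i = t.
Proof.
elim: s => //= a s IH [->|/IH [i [lt e]]]; first by exists 0.
by exists i.+1.
Qed.

Lemma power_in (G2 : group) (G1 : G2 -> Prop) : is_subgroup G1 -> finite_index G1 ->
  exists K, 0 < K /\ forall g : G2, G1 (gpow g K).
Proof.
case=> H1 HM HV [s Hs]; exists (size s)`!; split; first exact: fact_gt0.
move=> g.
have pw : forall h d, G1 h -> G1 (gpow h d).
  by move=> h d Hh; elim: d => [|d IH] //=; apply: HM.
have ex : forall k, exists i, i < size s /\ G1 (gmul (ginv (nth (gone G2) s i)) (gpow g k)).
  move=> k; have [t [/in_nth [i [lt <-]] Ht]] := Hs (gpow g k); by exists i.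
pose c k := projT1 (constructive_indefinite_description _ (ex k)).
have cP k : c k < size s /\ G1 (gmul (ginv (nth (gone G2) s (c k))) (gpow g k)).
  exact: (projT2 (constructive_indefinite_description _ (ex k))).
have diff : forall i j, i < j -> c i = c j -> G1 (gpow g (j - i)).
  move=> i j lij cij; have [_ hi] := cP i; have [_ hj] := cP j.
  have E : gpow g j = gpow g (i + (j - i)) by rewrite subnKC // ltnW.
  move: hj; rewrite -cij E gpowD gmulA => hj.
  by rewrite -(gcancel (gmul (ginv (nth (gone G2) s (c i))) (gpow g i)) (gpow g (j - i))); apply: HM => //; apply: HV.
pose c' (k : 'I_(size s).+1) : 'I_(size s) := Ordinal (proj1 (cP k)).
have : ~~ injectiveb c'.
  apply/negP => /injectiveP /leq_card; by rewrite !card_ord ltnn.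
case/injectivePn => i [j] nij eij.
have cij : c i = c j by move: eij => /(congr1 val).
have [d [d0 dle Hd]] : exists d, [/\ 0 < d, d <= size s & G1 (gpow g d)].
  case: (ltngtP i j) => [lij|lji|eq]; last by move: nij; rewrite (val_inj eq) eqxx.
    exists (j - i); split; [by rewrite subn_gt0 | | exact: diff].
    by rewrite leq_subLR -ltnS (leq_trans (ltn_ord j)) // ltnS leq_addl.
  exists (i - j); split; [by rewrite subn_gt0 | | exact: diff].
  by rewrite leq_subLR -ltnS (leq_trans (ltn_ord i)) // ltnS leq_addl.
have /dvdnP [q ->] : d %| (size s)`! by apply: dvdn_fact; rewrite d0 dle.
elim: q => [|q IH]; first by rewrite mul0n.
by rewrite mulSn gpowD; apply: HM.
Qed.

Definition Psi n K (u : {ffun 'I_n -> seq letter}) : {ffun 'I_n -> seq letter} :=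
  [ffun i => psi K (u i)].

Lemma transfer (G2 : group) (G1 : G2 -> Prop) n :
  is_subgroup G1 -> finite_index G1 -> embeds n (fun _ : G2 => True) -> embeds n G1.
Proof.
move=> sG fi; have [K [K0 HK]] := power_in sG fi.
case: sG => H1 HM HV [f [_ fhom finj]].
pose e : {ffun 'I_n -> seq letter} := [ffun _ => [::]].
have ee : F2n_elt e by move=> i; rewrite ffunE.
have fe : f e = gone G2.
  have : f e = gmul (f e) (f e).
    by rewrite -fhom //; congr f; apply/ffunP => i; rewrite !ffunE.
  by move=> E; rewrite -(gmulV (f e)) {3}E gmulA gmulV gmul1.
have Psie (u : {ffun 'I_n -> seq letter}) : F2n_elt u -> F2n_elt (Psi K u).
  by move=> eu i; rewrite ffunE; apply: reduced_psi.
have PsiM (u v : {ffun 'I_n -> seq letter}) : Psi K (F2n_mul u v) = F2n_mul (Psi K u) (Psi K v).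
  by apply/ffunP => i; rewrite !ffunE psi_reduce // psi_cat.
exists (fun u => f (Psi K u)); split.
- have emp : forall u : {ffun 'I_n -> seq letter}, (forall i, u i = [::]) -> f (Psi K u) = gone G2.
    by move=> u0 h; rewrite -fe; congr f; apply/ffunP => i; rewrite !ffunE h.
  move=> u; move: {2}(\sum_i size (u i)) (leqnn (\sum_i size (u i))) => N.
  elim: N u => [|N IH] u Hs eu; (case: (pickP (fun i => u i != [::])) => [i ui|none];
     last by rewrite emp // => i; apply/eqP/negbFE/none).
  + by move: Hs; rewrite (bigD1 i) //=; case: (u i) ui.
  + case E: (u i) ui => [|x w] // _.
    pose u' : {ffun 'I_n -> seq letter} := [ffun j => if j == i then w else u j].
    pose s1 : {ffun 'I_n -> seq letter} := [ffun j => if j == i then [:: x] else [::]].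
    have ew : reduced w by move: (eu i); rewrite E reducedE => /andP[].
    have eu' : F2n_elt u' by move=> j; rewrite ffunE; case: eqP.
    have es1 : F2n_elt s1 by move=> j; rewrite ffunE; case: eqP.
    have Hu : u = F2n_mul s1 u'.
      apply/ffunP => j; rewrite !ffunE; case: eqP => [->|_] /=.
        by rewrite -reduce_cons -E reduce_id.
      by rewrite reduce_id.
    rewrite Hu PsiM fhom; [apply: HM | exact: Psie | exact: Psie].
    * have pwE : forall k, f [ffun j => if j == i then nseq k x else [::]] = gpow (f s1) k.
        elim=> [|k IHk].
          by rewrite /gpow /= -fe; congr f; apply/ffunP => j; rewrite !ffunE; case: eqP.
        rewrite /gpow iterS -/(gpow _ _) -IHk -fhom //.
          congr f; apply/ffunP => j; rewrite !ffunE; case: eqP => _ //=.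
          symmetry; exact: (reduce_nseq x k.+1).
        by move=> j; rewrite ffunE; case: eqP => _ //; exact: reduced_nseq0.
      have -> : Psi K s1 = [ffun j => if j == i then nseq K x else [::]].
        by apply/ffunP => j; rewrite !ffunE; case: eqP => _ //; rewrite psi_cons cats0.
      by rewrite pwE.
    * apply: IH => //; rewrite (bigD1 i) //= ffunE eqxx.
      rewrite (eq_bigr (fun j => size (u j))); last by move=> j /negbTE; rewrite ffunE => ->.
      by move: Hs; rewrite (bigD1 i) //= E /= addSn ltnS.
- by move=> u v eu ev; rewrite PsiM fhom //; apply: Psie.
- move=> u v eu ev /finj E; apply/ffunP => i.
  have := congr1 (fun w : {ffun 'I_n -> seq letter} => w i) (E (Psie _ eu) (Psie _ ev)).
  by rewrite !ffunE => /(@psi_inj K K0).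
Qed.

Lemma nu_someP (G : group) (H : G -> Prop) (sH : is_subgroup H) m :
  nu sH = Some m -> embeds m H /\ forall n, embeds n H -> n <= m.
Proof.
rewrite /nu; case: excluded_middle_informative => // hb [<-].
case: ex_maxnP => i /embedsbP Hi Hmax; split => // n /embedsbP; exact: Hmax.
Qed.

Lemma nu_noneP (G : group) (H : G -> Prop) (sH : is_subgroup H) :
  nu sH = None -> ~ exists m, forall n, embeds n H -> n <= m.
Proof. by rewrite /nu; case: excluded_middle_informative. Qed.

Lemma le_nu (G1 G2 : group) (H1 : G1 -> Prop) (H2 : G2 -> Prop)
  (s1 : is_subgroup H1) (s2 : is_subgroup H2) :
  (forall n, embeds n H1 -> embeds n H2) -> le_ext (nu s1) (nu s2).
Proof.
move=> tr; case E1: (nu s1) => [a|]; case E2: (nu s2) => [b|] //=.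
  have [ea _] := nu_someP E1; have [_ mb] := nu_someP E2; exact/mb/tr.
apply: (nu_noneP E1); exists b => n /tr; exact: (proj2 (nu_someP E2)).
Qed.

Lemma le_ext_anti a b : le_ext a b -> le_ext b a -> a = b.
Proof. by case: a => [a|]; case: b => [b|] //= h1 h2; rewrite (@anti_leq a b) ?h1 ?h2. Qed.

Unset Implicit Arguments.
Theorem lemma2p2 (G2 : group) (G1 : G2 -> Prop) (sG1 : is_subgroup G1)
    (sG2 : is_subgroup (fun _ : G2 => True)) :
  le_ext (nu sG1) (nu sG2) /\
  (finite_index G1 -> nu sG1 = nu sG2).
Proof.
have up : le_ext (nu sG1) (nu sG2).
  apply: le_nu => n [f [_ h i]]; exists f; split => //.
split => // fi; apply: le_ext_anti => //.
apply: le_nu => n; exact: transfer.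
Qed.
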